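(* Let $K\ge2$, $a\ge0$ and $b>aK$. Let $\mathbf v=(-a+b,-b,0,\dots,0)'\in\mathbb{R}^K$ and $v(t)=t\mathbf v$, $t\ge0$. Then the solution of the Skorokhod problem for $v$ with respect to the matrix $\mathscr R$ satisfies $\Gamma_2(v)(t)=t\mathbf v_1$ for all $t\ge0$, where $\mathbf v_1=(b/K-a,0,\dots,0)'$.
   Context: $\mathscr R$ is the $K\times K$ matrix with $\mathscr R_{ii}=1$ for all $i$, $\mathscr R_{i,i+1}=-1/2$ for $i\le K-1$, $\mathscr R_{2,1}=-1$, $\mathscr R_{i,i-1}=-1/2$ for $3\le i\le K$, and all other entries $0$. For a right-continuous-with-left-limits path $x:[0,\infty)\to\mathbb{R}^K$ with $x(0)\ge0$, the Skorokhod problem for $x$ with respect to $\mathscr R$ has a unique solution $(\eta,y)$ of $\mathbb{R}_+^K$-valued paths such that $y(t)=x(t)+\mathscr R\eta(t)$ for all $t$, and for each $i$: $\eta_i(0)=0$, $\eta_i$ is nondecreasing, and $\int_0^\infty y_i(t)d\eta_i(t)=0$. Write $\Gamma(x)=(\Gamma_1(x),\Gamma_2(x))=(\eta,y)$. *)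

(* Defs.v *)
From HB Require Import structures.
From mathcomp Require Import all_boot all_order all_algebra.
From mathcomp Require Import all_classical all_reals all_analysis.
Set Implicit Arguments. Unset Strict Implicit. Unset Printing Implicit Defensive.
Import Order.TTheory GRing.Theory Num.Theory.
Import numFieldNormedType.Exports.
Local Open Scope classical_set_scope.
Local Open Scope ring_scope.

(* The K x K reflection matrix scR (0-indexed: paper index i is i.+1 here):
   diagonal 1; R_{i,i+1} = -1/2; R_{2,1} = -1; R_{i,i-1} = -1/2 for i >= 3. *)
Definition scR (R : realType) (K : nat) : 'M[R]_K :=
  \matrix_(i < K, j < K)
    if i == j then 1
    else if j.+1 == i :> nat then (if i == 1%N :> nat then -1 else -(1/2))
    else if i.+1 == j :> nat then -(1/2)
    else 0.

Definition rcll (R : realType) (p : R -> R) : Prop :=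
  (forall t : R, 0 <= t -> p x @[x --> t^'+] --> p t) /\
  (forall t : R, 0 < t -> cvg (p x @[x --> t^'-])).

(* A path [0,oo) -> R^K (represented on all of R, only t >= 0 matters) is rcll. *)
Definition rcll_path (R : realType) (K : nat) (p : R -> 'cV[R]_K) : Prop :=
  forall i : 'I_K, rcll (fun t => p t i 0).

(* Extension by 0 to negative times of the i-th coordinate of eta, used to
   define the Lebesgue-Stieltjes measure d eta_i on [0, oo). *)
Definition ext0 (R : realType) (K : nat) (eta : R -> 'cV[R]_K) (i : 'I_K) :
  R -> R := fun t => if t < 0 then 0 else eta t i 0.

Definition skorokhod_solution (R : realType) (K : nat) (M : 'M[R]_K)
    (x eta y : R -> 'cV[R]_K) : Prop :=
  rcll_path eta /\ rcll_path y /\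
  (forall t, 0 <= t -> forall i, 0 <= eta t i 0 /\ 0 <= y t i 0) /\
  (forall t, 0 <= t -> y t = x t + M *m eta t) /\
  (forall i, eta 0 i 0 = 0) /\
  (forall i s t, 0 <= s -> s <= t -> eta s i 0 <= eta t i 0) /\
  (forall i, exists f : cumulative R R, (f : R -> R) = ext0 eta i /\
     (\int[lebesgue_stieltjes_measure f]_(t in [set t : R | (0 <= t)%R]) (y t i 0)%:E = 0)%E).

(* Main.v *)
Require Import Defs.
From HB Require Import structures.
From mathcomp Require Import all_boot all_order all_algebra.
From mathcomp Require Import all_classical all_reals all_analysis.
From mathcomp Require Import ring lra.
Import Order.TTheory GRing.Theory Num.Theory.
Import numFieldNormedType.Exports.
Local Open Scope classical_set_scope.
Local Open Scope ring_scope.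

Section Mat.
Variable R : realType.

Lemma sum_delta (n k : nat) (F : nat -> R) :
  \sum_(j < n) (if (j : nat) == k then F j else 0) = if (k < n)%N then F k else 0.
Proof.
elim: n => [|n IH]; first by rewrite big_ord0.
rewrite big_ord_recr /= IH.
case: (ltngtP k n) => [kn|nk|->]; rewrite ?eqxx.
- by rewrite addr0 ltnS ltnW.
- by rewrite addr0 ltnS leqNgt nk.
- by rewrite add0r ltnSn.
Qed.

Definition cc (i : nat) : R := if i == 1%N then -1 else -(1/2).

Lemma scR_entry (K : nat) (i j : 'I_K) (g : nat -> R) :
  scR R K i j * g j =
  (if (j : nat) == i then g j else 0) +
  (if (0 < i)%N && ((j : nat) == i.-1) then cc i * g j else 0) +
  (if (j : nat) == i.+1 then -(1/2) * g j else 0).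
Proof.
rewrite /scR mxE /cc.
case: (ltngtP i j) => [ij|ji|/val_inj ->]; last first.
- rewrite !eqxx mul1r.
  have -> : (0 < j)%N && ((j : nat) == j.-1) = false.
    by case: (nat_of_ord j) => // n; rewrite /= eq_sym (ltn_eqF (ltnSn n)).
  by rewrite (ltn_eqF (ltnSn j)) !addr0 mul1r.
- have -> : (i == j) = false by apply/negbTE; rewrite -val_eqE /= gtn_eqF.
  have i0 : (0 < i)%N by apply: leq_ltn_trans ji.
  rewrite i0 /=.
  case: eqP => [E|NE].
    have -> : (j : nat) == i.-1 by rewrite -E.
    by rewrite (ltn_eqF (ltn_trans ji (ltnSn i))) add0r addr0; case: (i == 1%N :> nat).
  have -> : ((j : nat) == i.-1) = false.
    apply/eqP => E; apply: NE; rewrite E prednK //.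
  have -> : ((i.+1 : nat) == j) = false by rewrite gtn_eqF // ltnS ltnW.
  by rewrite mul0r (ltn_eqF (ltn_trans ji (ltnSn i))) !addr0.
- have -> : (i == j) = false by apply/negbTE; rewrite -val_eqE /= ltn_eqF.
  have -> : ((j.+1 : nat) == i) = false by rewrite gtn_eqF // ltnS ltnW.
  have -> : (0 < i)%N && ((j : nat) == i.-1) = false.
    case: (0 < i)%N => //=; apply/negbTE; rewrite neq_ltn; apply/orP; right.
    by apply: leq_ltn_trans ij; apply: leq_pred.
  rewrite add0r add0r.
  by case: eqP => [->|]; rewrite ?eqxx ?mul1r // => /eqP; rewrite eq_sym => /negbTE ->; rewrite mul0r.
Qed.

Lemma scR_col (K : nat) (g : nat -> R) (i : 'I_K) :
  (scR R K *m \col_(j < K) g j) i 0 =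
  g i + (if (0 < i)%N then cc i * g i.-1 else 0) +
  (if (i.+1 < K)%N then -(1/2) * g i.+1 else 0).
Proof.
rewrite mxE.
under eq_bigr do rewrite [X in _ * X]mxE (scR_entry _ _ _ g).
rewrite !big_split /= !sum_delta ltn_ord.
congr (_ + _ + _).
rewrite (eq_bigr (fun j : 'I_K => if (0 < i)%N then (if (j:nat) == i.-1 then cc i * g j else 0) else 0)); last first.
  by move=> j _; case: (0 < i)%N.
case: (ltnP 0 i) => i0.
  rewrite (sum_delta _ _ (fun j => cc i * g j)); have -> : (i.-1 < K)%N by apply: leq_ltn_trans (leq_pred _) (ltn_ord i).
  by [].
  by rewrite big1.
by rewrite (sum_delta _ _ (fun j => - (1/2) * g j)).
Qed.

End Mat.

Section Vec.
Variable R : realType.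

Definition ge (K : nat) (b : R) (j : nat) : R :=
  if j == 0%N then 0 else 2 * b * (1 - j%:R / K%:R).

Lemma C1 (K : nat) (a b : R) : (2 <= K)%N -> forall i : 'I_K,
  (scR R K *m \col_(j < K) ge K b j) i 0 =
  (if i == 0%N :> nat then b / K%:R - a else 0) -
  (if i == 0%N :> nat then b - a else if i == 1%N :> nat then - b else 0).
Proof.
move=> K2 [[|[|i]] Hi]; rewrite scR_col /= /ge /cc /=;
  have kn0 : (K%:R : R) != 0 by rewrite pnatr_eq0 -lt0n; apply: leq_trans K2.
- rewrite K2 /=. by field.
- case: (ltnP 2 K) => K3; rewrite ?K3 ?(leqNgt K 2) ?K3 /=.
    by field.
  have -> : K = 2%N by apply/eqP; rewrite eqn_leq K2 K3.
  by field.
- case: (ltnP i.+3 K) => K3.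
    rewrite -!natr1. by field.
  have -> : K = i.+3 by apply/eqP; rewrite eqn_leq K3 Hi.
  rewrite -!natr1. by field.
Qed.


Definition wt (K : nat) (j : nat) : R :=
  if j == 0%N then K%:R ^+ 2 + 1/2 else 2 * K%:R ^+ 2 - j%:R ^+ 2.

Lemma C2 (K : nat) : (2 <= K)%N -> forall i : 'I_K,
  1/2 <= (scR R K *m \col_(j < K) wt K j) i 0.
Proof.
move=> K2 [[|[|i]] Hi]; rewrite scR_col /= /wt /cc /=.
- rewrite K2 /= !expr2. nra.
- case: (ltnP 2 K) => K3; rewrite ?K3 ?(leqNgt K 2) ?K3 /=.
    rewrite !expr2; lra.
  have -> : K = 2%N by apply/eqP; rewrite eqn_leq K2 K3.
  rewrite !expr2; lra.
- case: (ltnP i.+3 K) => K3.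
    rewrite -[i.+3]addn3 -[i.+2]addn2 -[i.+1]addn1 !natrD !expr2; lra.
  have -> : K = i.+3 by apply/eqP; rewrite eqn_leq K3 Hi.
  rewrite -[i.+3]addn3 -[i.+2]addn2 -[i.+1]addn1 !natrD !expr2.
  have : 0 <= i%:R :> R by []. nra.
Qed.

Lemma wt_bounds (K : nat) (i : 'I_K) : 1 <= wt K i /\ wt K i <= 2 * K%:R ^+ 2.
Proof.
case: i => [[|i] Hi]; rewrite /wt /=.
  have : 1 <= K%:R :> R by rewrite ler1n.
  split; nra.
have : (i.+1%:R : R) + 1 <= K%:R by rewrite natr1 ler_nat.
have : 0 <= i%:R :> R by [].
rewrite -natr1.
split; nra.
Qed.

Lemma P_ge0 (K : nat) (i j : 'I_K) : 0 <= (1%:M - scR R K) i j.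
Proof.
rewrite /scR !mxE.
case: eqP => _ /=; first lra.
case: ifP => _; first by case: ifP => _; lra.
case: ifP => _; lra.
Qed.

End Vec.

Section LB.
Context d (T : measurableType d) (R : realType).
Variable mu : {measure set T -> \bar R}.
Import HBNNSimple.

Lemma int_lb (D I : set T) (mI : measurable I) (z : T -> R) (c : R) (c0 : 0 <= c) :
  I `<=` D -> (forall x, D x -> 0 <= z x) -> (forall x, I x -> c <= z x) ->
  (c%:E * mu I <= \int[mu]_(x in D) (z x)%:E)%E.
Proof.
move=> ID z0 zc.
rewrite integral_mkcond ge0_integralTE; last first.
  by move=> x; rewrite /patch; case: ifP => // /set_mem Dx; rewrite lee_fin z0.
apply: ereal_sup_ubound => /=.
exists (scale_nnsfun (indic_nnsfun R mI) c0).
  move=> x /=; rewrite /patch; case: ifPn => [/set_mem Dx|nDx].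

    rewrite /measurable_realfun.mindic indicE; case: (boolP (x \in I)) => [/set_mem Ix|_].
      by rewrite mulr1 lee_fin zc.
    by rewrite mulr0 lee_fin z0.
  rewrite /measurable_realfun.mindic indicE; case: (boolP (x \in I)) => [/set_mem Ix|_].
    by exfalso; move/negP: nDx; apply; apply/mem_set; apply: ID.
  by rewrite mulr0.
by rewrite sintegralrM sintegral_indic.
Qed.

End LB.

Section OneD.
Variable R : realType.

Lemma ls_oc (f : cumulative R R) (u v : R) : u <= v ->
  lebesgue_stieltjes_measure f `]u, v] = (f v - f u)%:E.
Proof.
move=> uv.
rewrite /lebesgue_stieltjes_measure /measure_extension /=.
by rewrite measurable_mu_extE /= ?wlength_itv_bnd //; exact: is_ocitv.
Qed.

Lemma exists_inv_lt (e : R) : 0 < e -> exists n : nat, n.+1%:R^-1 < e.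
Proof.
move=> e0; exists (Num.truncn e^-1).
rewrite -[X in _ < X]invrK ltf_pV2 ?posrE ?invr_gt0 //.
exact: truncnS_gt.
Qed.

Lemma ls_cc_ge (f : cumulative R R) (u v c : R) : u <= v ->
  (forall s, s < u -> f s <= c) ->
  ((f v - c)%:E <= lebesgue_stieltjes_measure f `[u, v])%E.
Proof.
move=> uv fc.
pose F n := `]u - n.+1%:R^-1, v]%classic : set R.
have FE : \bigcap_n F n = `[u, v]%classic.
  apply/seteqP; split => x /=.
    move=> Hx; rewrite in_itv /=.
    have := Hx 0%N I; rewrite /F /= in_itv /= => /andP[_ ->]; rewrite andbT.
    rewrite leNgt; apply/negP => xu.
    have [n Hn] : exists n : nat, n.+1%:R^-1 < u - x.
      by apply: exists_inv_lt; rewrite subr_gt0.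
    have := Hx n I; rewrite /F /= in_itv /= => /andP[+ _].
    move: Hn; set q := n.+1%:R^-1 => Hn H; lra.
  rewrite in_itv /= => /andP[ux xv] n _; rewrite /F /= in_itv /= xv andbT.
  by apply: lt_le_trans ux; rewrite ltrBlDr ltrDl invr_gt0.
have mF n : measurable (F n) by exact: measurable_itv.
have Fle n : u - n.+1%:R^-1 <= v.
  by apply: le_trans uv; rewrite lerBlDr lerDl invr_ge0.
have muF n : lebesgue_stieltjes_measure f (F n) = (f v - f (u - n.+1%:R^-1))%:E.
  exact: ls_oc.
have cv : (lebesgue_stieltjes_measure f \o F) x @[x --> \oo] --> lebesgue_stieltjes_measure f `[u, v]%classic.
  rewrite -FE; apply: nonincreasing_cvg_mu => //.
  - by rewrite (_ : _ (F 0%N) = (f v - f (u - 1%:R^-1))%:E) ?ltry //; exact: muF.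
  - by rewrite FE; exact: measurable_itv.
  - move=> n m nm; apply/subsetPset => x /=; rewrite /F /= !in_itv /= => /andP[+ ->].
    rewrite andbT; apply: le_lt_trans; rewrite lerB //.
    by rewrite lef_pV2 ?posrE // ler_nat.
rewrite -(cvg_lim _ cv) //.
apply: lime_ge; first by apply/cvg_ex; eexists; exact: cv.
apply: nearW => n /=; rewrite muF lee_fin lerB //; apply: fc.
by rewrite ltrBlDr ltrDl invr_gt0.
Qed.


Lemma oneD (f : cumulative R R) (z : R -> R) (t B : R) :
  0 <= t -> f 0 <= B ->
  (forall s, 0 <= s -> 0 <= z s) ->
  (forall s, 0 <= s -> s <= t -> f s <= B + z s) ->
  (\int[lebesgue_stieltjes_measure f]_(s in [set s : R | (0 <= s)%R]) (z s)%:E = 0)%E ->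
  f t <= B.
Proof.
move=> t0 f0B z0 hz hint.
rewrite leNgt; apply/negP => Bft.
pose e := (f t - B) / 2.
have e0 : 0 < e by rewrite /e; lra.
have eE : f t = B + 2 * e by rewrite /e; lra.
clearbody e.
have fnd := @cumulative_is_nondecreasing _ _ _ f.
pose A := [set s | s <= t /\ f s <= B + e].
have A0 : A 0 by split => //; lra.
have hA : has_sup A by split; [exists 0 | exists t => s []].
pose tau := sup A.
have ub : forall s, A s -> s <= tau by move=> s As; exact: sup_upper_bound.
have tau0 : 0 <= tau by exact: ub.
have taut : tau <= t by apply: ge_sup; [exists 0 | move=> s []].
have Hgt : forall s, tau < s -> s <= t -> B + e < f s.
  move=> s ts st; rewrite ltNge; apply/negP => fs.
  have := ub s (conj st fs); lra.
have Hlt : forall s, s < tau -> f s <= B + e.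
  move=> s st.
  have [x [xt fx] hx] := @sup_adherent _ A (tau - s) (ltac:(lra)) hA.
  apply: le_trans fx; apply: fnd; rewrite -/tau in hx; lra.
suff [I [mI [ID [Iz Imu]]]] : exists I : set R, measurable I /\
    I `<=` [set s : R | 0 <= s] /\ (forall s, I s -> e <= z s) /\
    (e%:E <= lebesgue_stieltjes_measure f I)%E.
  have := @int_lb _ _ R (lebesgue_stieltjes_measure f) [set s : R | 0 <= s] I mI z e (ltW e0) ID.
  move=> /(_ (fun s => z0 s) Iz); rewrite hint.
  move=> H; have : (e%:E * e%:E <= 0)%E.
    apply: le_trans H; apply: lee_pmul => //; by rewrite lee_fin ltW.
  rewrite -EFinM lee_fin; nra.
have [ftau|ftau] := leP (f tau) (B + e).
  exists `]tau, t]%classic; split; first exact: measurable_itv.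
  split; first by move=> s /=; rewrite in_itv /= => /andP[ts _]; lra.
  split.
    move=> s /=; rewrite in_itv /= => /andP[ts st].
    have := Hgt s ts st; have := hz s (ltac:(lra)) st; lra.
  rewrite ls_oc // lee_fin; lra.
exists `[tau, t]%classic; split; first exact: measurable_itv.
split; first by move=> s /=; rewrite in_itv /= => /andP[ts _]; lra.
split.
  move=> s /=; rewrite in_itv /= => /andP[ts st].
  have := fnd _ _ ts; have := hz s (ltac:(lra)) st; lra.
apply: (le_trans _ (@ls_cc_ge f tau t (B + e) taut Hlt)); rewrite lee_fin; lra.
Qed.

End OneD.

Section Ex.
Variable R : realType.
Import HBNNSimple.

Lemma rcll_lin (c : R) : rcll (fun t => t * c).
Proof.
have h (t : R) : (fun s : R => s * c) x @[x --> t] --> t * c.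
  by apply: (@cvgMl _ _ _ _ (fun s => s)); exact: cvg_id.
split => t _.
  exact: cvg_at_right_filter.
by apply/cvg_ex; exists (t * c); exact: cvg_at_left_filter.
Qed.

Definition ramp (c : R) (s : R) : R := Num.max 0 s * Num.max 0 c.

Lemma ramp_nd (c : R) : nondecreasing (ramp c).
Proof.
move=> x y xy; rewrite /ramp; apply: ler_wpM2r.
  by rewrite le_max lexx.
rewrite ge_max; apply/andP; split; rewrite le_max ?lexx //.
by rewrite xy orbT.
Qed.

Lemma ramp_rc (c : R) : right_continuous (ramp c).
Proof.
move=> x; apply: cvg_at_right_filter; apply: (@cvgMl _ _ _ _ (fun s => Num.max 0 s)).
have := @max_fun_continuous _ _ _ (cst (0:R)) (fun s => s) (fun y => cvg_cst _) (fun y => cvg_id) x.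
move=> H; apply: H => y; exact: nbhs_filter.
Qed.

HB.instance Definition _ (c : R) := isCumulative.Build R _ R (ramp c) (ramp_nd c) (ramp_rc c).


Lemma ramp0 (s : R) : ramp 0 s = 0.
Proof. by rewrite /ramp maxxx mulr0. Qed.

Lemma ls_ramp0_null (A : set R) : measurable A ->
  lebesgue_stieltjes_measure (ramp 0) A = 0%E.
Proof.
move=> mA.
pose F n := `](- n%:R), n%:R]%classic : set R.
have FT : \bigcup_n F n = setT.
  apply/seteqP; split => // x _.
  exists (Num.truncn `|x|).+1 => //; rewrite /F /= in_itv /=.
  have h1 := truncnS_gt `|x|.
  have h2 : - `|x| <= x <= `|x| by rewrite -ler_norml.
  apply/andP; split; lra.
have mF n : measurable (F n) by exact: measurable_itv.
have cv : (lebesgue_stieltjes_measure (ramp 0) \o F) x @[x --> \oo] -->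
    lebesgue_stieltjes_measure (ramp 0) (\bigcup_n F n).
  apply: nondecreasing_cvg_mu => //.
    by rewrite FT; exact: measurableT.
  move=> n m nm; apply/subsetPset => x /=; rewrite /F /= !in_itv /= => /andP[h1 h2].
  have : (n%:R : R) <= m%:R by rewrite ler_nat.
  move=> nmR; apply/andP; split; lra.
have F0 : (lebesgue_stieltjes_measure (ramp 0) \o F) = cst 0%E.
  apply/funext => n /=.
  rewrite /lebesgue_stieltjes_measure /measure_extension /=.
  rewrite measurable_mu_extE /= ?wlength_itv_bnd ?ramp0 ?subrr //; last exact: is_ocitv.
  have : (0 : R) <= n%:R by [].
  lra.
rewrite F0 FT in cv.
have T0 : lebesgue_stieltjes_measure (ramp 0) setT = 0%E.
  by apply/esym; apply: (cvg_unique _ (cvg_cst _) cv).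
apply/eqP; rewrite eq_le measure_ge0 andbT -T0.
by apply: le_measure => //; rewrite inE.
Qed.

Lemma ls_zero_int (g : R -> R) : (forall s, 0 <= s -> 0 <= g s) ->
  (\int[lebesgue_stieltjes_measure (ramp 0)]_(s in [set s : R | (0 <= s)%R]) (g s)%:E = 0)%E.
Proof.
move=> g0.
apply/eqP; rewrite eq_le integral_ge0 ?andbT; last by move=> x /= x0; rewrite lee_fin g0.
rewrite integral_mkcond ge0_integralTE; last first.
  by move=> x; rewrite /patch; case: ifP => // /set_mem /= x0; rewrite lee_fin g0.
apply: ge_ereal_sup => _ [h _ <-].
rewrite sintegralE fsbig1 // => r _.
rewrite (_ : _ (HBNNSimple.NonNegSimpleFun.sort h @^-1` [set r]) = 0%E) ?mule0 //.
apply: ls_ramp0_null. have H := measurable_sfunP h (measurable_set1 r). exact: H.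
Qed.

End Ex.

Section Main.
Variable R : realType.

Lemma le_sum1 (K : nat) (F : 'I_K -> R) (j : 'I_K) :
  (forall k, 0 <= F k) -> F j <= \sum_k F k.
Proof.
move=> F0; rewrite (bigD1 j) //= lerDl; apply: sumr_ge0 => k _; exact: F0.
Qed.

Lemma contr (K : nat) (D : R -> 'cV[R]_K) (W : 'cV[R]_K) (T rho : R) :
  (forall j, 0 < W j 0) -> 0 <= rho -> rho < 1 ->
  (exists M0, 0 <= M0 /\ forall j s, 0 <= s -> s <= T -> D s j 0 <= M0 * W j 0) ->
  (forall M, 0 <= M -> (forall j s, 0 <= s -> s <= T -> D s j 0 <= M * W j 0) ->
      forall j s, 0 <= s -> s <= T -> D s j 0 <= rho * M * W j 0) ->
  forall j s, 0 <= s -> s <= T -> D s j 0 <= 0.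
Proof.
move=> W0 r0 r1 [M0 [M00 HM0]] step.
pose S := [set M | 0 <= M /\ forall j s, 0 <= s -> s <= T -> D s j 0 <= M * W j 0].
have SM0 : S M0 by [].
have hlb : has_lbound S by exists 0 => M [].
pose m := inf S.
have m0 : 0 <= m by apply: lb_le_inf; [exists M0 | move=> M []].
have Sm : S m.
  split => // j s s0 sT.
  have : D s j 0 / W j 0 <= m.
    apply: lb_le_inf; first by exists M0.
    by move=> M [_ HM]; rewrite ler_pdivrMr //; exact: HM.
  by rewrite ler_pdivrMr.
have Srm : S (rho * m) by split; [exact: mulr_ge0 | exact: (step m m0 Sm.2)].
have mrm : m <= rho * m by exact: ge_inf.
have m00 : m = 0 by nra.
move=> j s s0 sT; have := Sm.2 j s s0 sT; by rewrite m00 mul0r.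
Qed.

End Main.

Theorem lemma7p1 (R : realType) (K : nat) (a b : R) :
  (2 <= K)%N -> 0 <= a -> a * K%:R < b ->
  let vv : 'cV[R]_K :=
    \col_(i < K) (if i == 0%N :> nat then b - a
                  else if i == 1%N :> nat then - b else 0) in
  let vv1 : 'cV[R]_K :=
    \col_(i < K) (if i == 0%N :> nat then b / K%:R - a else 0) in
  (exists eta y : R -> 'cV[R]_K,
      skorokhod_solution (scR R K) (fun t => t *: vv) eta y) /\
  (forall eta y : R -> 'cV[R]_K,
      skorokhod_solution (scR R K) (fun t => t *: vv) eta y ->
      forall t : R, 0 <= t -> y t = t *: vv1).
Proof.
move=> K2 a0 aKb vv vv1.
have Kpos : (0 : R) < K%:R by rewrite ltr0n; apply: leq_trans K2.
have b0 : 0 < b by have := mulr_ge0 a0 (ltW Kpos); lra.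
have c0 : 0 <= b / K%:R - a by rewrite subr_ge0 ler_pdivlMr // ltW.
pose E : 'cV[R]_K := \col_(j < K) ge R K b j.
have E0 : forall j, 0 <= E j 0.
  move=> j; rewrite mxE /ge; case: eqP => // _.
  apply: mulr_ge0; first lra.
  rewrite subr_ge0 ler_pdivrMr // mul1r ler_nat; exact: ltnW.
have hE : scR R K *m E = vv1 - vv.
  by apply/matrixP => i j; rewrite (ord1 j) (C1 R K a b K2) !mxE.
have vv10 : forall j, 0 <= vv1 j 0 by move=> j; rewrite mxE; case: eqP.
have E00 : forall j : 'I_K, (j : nat) = 0%N -> E j 0 = 0.
  by move=> j j0; rewrite mxE /ge j0.
have vv1nz : forall j : 'I_K, (j : nat) <> 0%N -> vv1 j 0 = 0.
  by move=> j j0; rewrite mxE; case: eqP.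
clearbody E vv1.
have ysol : forall t, t *: vv1 = t *: vv + scR R K *m (t *: E).
  by move=> t; rewrite -scalemxAr hE scalerBr addrC subrK.
have rcsc : forall M : 'cV[R]_K, rcll_path (fun t => t *: M).
  move=> M i.
  have -> : (fun t => (t *: M) i 0) = (fun t => t * M i 0).
    by apply/funext => t; rewrite mxE.
  exact: rcll_lin.
split.
  exists (fun t => t *: E), (fun t => t *: vv1).
  split; first exact: rcsc.
  split; first exact: rcsc.
  split.
    by move=> t t0 i; rewrite !mxE; split; apply: mulr_ge0 => //; try exact: E0; try exact: vv10.
  split; first by move=> t _; exact: ysol.
  split; first by move=> i; rewrite scale0r mxE.
  split.
    by move=> i s t s0 st; rewrite !mxE; apply: ler_wpM2r => //; exact: E0.
  move=> i.
  exists (ramp R (E i 0) : cumulative R R); split.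
    apply/funext => s; rewrite /ext0 /ramp mxE (max_idPr (E0 i)).
    case: ltP => s0 /=; rewrite /ramp (max_idPr (E0 i)); first by rewrite (max_idPl (ltW s0)) mul0r.
    by rewrite (max_idPr s0).
  case: (eqVneq (i : nat) 0%N) => i0.
    rewrite (E00 i i0).
    apply: ls_zero_int => s s0; rewrite mxE; apply: mulr_ge0 => //; exact: vv10.
  apply: integral0_eq => s _; rewrite !mxE vv1nz ?mulr0 //; exact/eqP.
move=> eta y [rcE [rcY [nn [eqy [e0 [mono hint]]]]]] t0 t00.
pose Pm := 1%:M - scR R K.
pose W : 'cV[R]_K := \col_(j < K) wt R K j.
pose kap : R := 1 / (4 * K%:R ^+ 2).
have kap0 : 0 < kap by rewrite /kap divr_gt0 // mulr_gt0 // exprn_gt0.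
have kapW : kap * (2 * K%:R ^+ 2) = 1/2.
  rewrite /kap; field; exact: lt0r_neq0.
have kap1 : kap <= 1/2.
  have h : 1 <= K%:R :> R by rewrite ler1n; apply: leq_trans K2.
  move: kapW; rewrite expr2 => kW; nra.
pose rho := 1 - kap.
have W1 : forall j, 1 <= W j 0 /\ W j 0 <= 2 * K%:R ^+ 2.
  by move=> j; rewrite mxE; exact: wt_bounds.
have PmW : forall j, 0 <= (Pm *m W) j 0 /\ (Pm *m W) j 0 <= rho * W j 0.
  move=> j; split.
    rewrite mxE; apply: sumr_ge0 => k _; apply: mulr_ge0; first exact: P_ge0.
    by have := W1 k; lra.
  have -> : (Pm *m W) j 0 = W j 0 - (scR R K *m W) j 0.
    by rewrite /Pm mulmxBl mul1mx !mxE.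
  have := C2 R K K2 j; rewrite -/W => h.
  have [h1 h2] := W1 j.
  have : kap * W j 0 <= 1/2 by rewrite -kapW ler_wpM2l // ltW.
  rewrite /rho; lra.
have PmD : forall (D : 'cV[R]_K) M j, (forall k, D k 0 <= M * W k 0) ->
    (Pm *m D) j 0 <= M * (Pm *m W) j 0.
  move=> D M j HD; rewrite !mxE mulr_sumr; apply: ler_sum => k _.
  by rewrite mulrCA; apply: ler_wpM2l; [exact: P_ge0 | exact: HD].
pose Dl s := eta s - s *: E.
have keyR : forall s, 0 <= s -> scR R K *m Dl s = y s - s *: vv1.
  move=> s s0; rewrite (eqy s s0) /Dl mulmxBr -scalemxAr hE.
  move: (scR R K *m eta s) => X; apply/matrixP => i j; rewrite !mxE; ring.
have keyP : forall s j, 0 <= s ->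
    (Pm *m Dl s) j 0 = (eta s j 0 - s * E j 0) - (y s j 0 - s * vv1 j 0).
  move=> s j s0; rewrite /Pm mulmxBl mul1mx (keyR s s0) /Dl !mxE //.
have DlE : forall s j, Dl s j 0 = eta s j 0 - s * E j 0 by move=> s j; rewrite !mxE.
have W0 : forall j, 0 < W j 0 by move=> j; have := W1 j; lra.
have rho0 : 0 <= rho by rewrite /rho; lra.
have rho1 : rho < 1 by rewrite /rho; lra.
have stepA : forall j s, 0 <= s -> s <= t0 -> Dl s j 0 <= 0.
  apply: (@contr R K Dl W t0 rho W0 rho0 rho1).
    exists (\sum_k eta t0 k 0); split.
      by apply: sumr_ge0 => k _; have := nn t0 t00 k; case.
    move=> j s s0 st; rewrite DlE.
    have h1 : eta s j 0 <= eta t0 j 0 by exact: mono.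
    have h2 : eta t0 j 0 <= \sum_k eta t0 k 0.
      by apply: (@le_sum1 R K (fun k => eta t0 k 0)) => k; have := nn t0 t00 k; case.
    have h3 : 0 <= s * E j 0 by apply: mulr_ge0.
    have h4 : 0 <= \sum_k eta t0 k 0 by apply: sumr_ge0 => k _; have := nn t0 t00 k; case.
    have [h5 _] := W1 j.
    have : 0 <= (\sum_k eta t0 k 0) * (W j 0 - 1) by apply: mulr_ge0 => //; lra.
    lra.
  move=> M M0 HM j s0 s00 s0t.
  have [f [fE fint]] := hint j.
  have [PW0 PWr] := PmW j.
  have E0j := E0 j.
  have B0 : 0 <= s0 * E j 0 + M * (Pm *m W) j 0.
    by apply: addr_ge0; apply: mulr_ge0.
  have := @oneD R f (fun s => y s j 0) s0 (s0 * E j 0 + M * (Pm *m W) j 0) s00.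
  have f0 : f 0 = 0 by rewrite fE /ext0 ltxx e0.
  move=> /(_ _ _ _ fint).
  have fs : forall s, 0 <= s -> f s = eta s j 0.
    by move=> s hs; rewrite fE /ext0 ltNge hs.
  rewrite (fs s0 s00) => H.
  have : eta s0 j 0 <= s0 * E j 0 + M * (Pm *m W) j 0.
    apply: H.
    - by rewrite f0.
    - by move=> s hs; have := nn s hs j; case.
    - move=> s hs ss0; rewrite fs //.
      have := keyP s j hs.
      have := PmD (Dl s) M j (fun k => HM k s hs (le_trans ss0 s0t)).
      have := nn s hs j; case => _ ys.
      have : s * E j 0 <= s0 * E j 0 by apply: ler_wpM2r.
      have : 0 <= s * vv1 j 0 by apply: mulr_ge0.
      lra.
  rewrite DlE.
  have : M * (Pm *m W) j 0 <= M * (rho * W j 0) by apply: ler_wpM2l.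
  lra.
have NE : forall s j, (- Dl s) j 0 = - (Dl s j 0) by move=> s j; rewrite mxE.
have stepB : forall j s, 0 <= s -> s <= t0 -> (- Dl s) j 0 <= 0.
  apply: (@contr R K (fun s => - Dl s) W t0 rho W0 rho0 rho1).
    have hS : 0 <= \sum_k E k 0 by apply: sumr_ge0 => k _; exact: E0.
    exists (t0 * \sum_k E k 0); split; first exact: mulr_ge0.
    move=> j s s0 st; rewrite NE DlE.
    have := nn s s0 j; case => h1 _.
    have h2 : s * E j 0 <= t0 * E j 0 by apply: ler_wpM2r => //; exact: E0.
    have h3 : E j 0 <= \sum_k E k 0 by apply: (@le_sum1 R K (fun k => E k 0)) => k; exact: E0.
    have h4 : t0 * E j 0 <= t0 * \sum_k E k 0 by apply: ler_wpM2l.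
    have [h5 _] := W1 j.
    have : 0 <= (t0 * \sum_k E k 0) * (W j 0 - 1) by apply: mulr_ge0; [exact: mulr_ge0 | lra].
    lra.
  move=> M M0 HM j s s0 st.
  have [PW0 PWr] := PmW j.
  have hR : 0 <= rho * M * W j 0 by apply: mulr_ge0; [exact: mulr_ge0 | exact: ltW].
  case: (eqVneq (j : nat) 0%N) => j0.
    have := stepA j s s0 st; rewrite NE !DlE (E00 j j0) mulr0 subr0 => h.
    have := nn s s0 j; case => h2 _.
    lra.
  have := keyP s j s0; rewrite (vv1nz j (elimN eqP j0)) mulr0 subr0 => kP.
  have := PmD (- Dl s) M j (fun k => HM k s s0 st).
  have -> : (Pm *m - Dl s) j 0 = - (Pm *m Dl s) j 0 by rewrite mulmxN mxE.
  have := nn s s0 j; case => _ ys.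
  have : M * (Pm *m W) j 0 <= M * (rho * W j 0) by apply: ler_wpM2l.
  rewrite NE DlE; lra.
have Dz : Dl t0 = 0.
  apply/matrixP => j k; rewrite (ord1 k) [RHS]mxE.
  have := stepA j t0 t00 (lexx _); have := stepB j t0 t00 (lexx _); rewrite NE; lra.
rewrite (eqy t0 t00) ysol; congr (_ + _); congr (_ *m _).
by apply/eqP; rewrite -subr_eq0; apply/eqP; exact: Dz.
Qed.
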